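(* Let $f_0, g_0 \in \mathbb{C}[z]$ be polynomials of equal length having nonzero constant coefficients. Let $\sigma_0,\sigma_1,\ldots$ be a sequence of values from $\{-1,1\}$, and define $f_n,g_n$ recursively for all $n \in \mathbb{N}$ by \[ f_{n+1}(z) = f_n(z)+\sigma_n z^{\operatorname{len} f_n} f_n^\dagger(-z), \qquad g_{n+1}(z) = g_n(z)+\sigma_n z^{\operatorname{len} g_n} g_n^\dagger(-z). \] Then for every $n\ge 0$, \begin{multline*} \frac{\|f_n g_n\|_2^2}{\|f_n\|_2^2\|g_n\|_2^2} = \frac{2 \|f_0 g_0\|_2^2+\|f_0 \widetilde{g}_0\|_2^2 + \operatorname{Re} \int f_0 \widetilde{f}_0 \overline{g_0 \widetilde{g}_0}}{3 \|f_0\|_2^2 \|g_0\|_2^2} \\ +\left(-\frac{1}{2}\right)^n \frac{\|f_0 g_0\|_2^2 -\|f_0 \widetilde{g}_0\|_2^2 - \operatorname{Re} \int f_0 \widetilde{f}_0 \overline{g_0 \widetilde{g}_0}}{3 \|f_0\|_2^2 \|g_0\|_2^2}. \end{multline*}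
   Context: For a polynomial $a(z)=a_0+\cdots+a_dz^d$ of degree $d$, $\operatorname{len} a=1+\deg a$ and $a^\dagger(z)=\overline{a_d}+\overline{a_{d-1}}z+\cdots+\overline{a_0}z^d$ (conjugate reciprocal); $f_n^\dagger(-z)$ means $f_n^\dagger$ evaluated at $-z$. For a Laurent polynomial $a(z)=\sum_j a_jz^j$: $\widetilde{a}(z)=a(-z)$, $\overline{a(z)}=\sum_j\overline{a_j}z^{-j}$, $\int a$ is the constant coefficient $a_0=\frac{1}{2\pi}\int_0^{2\pi}a(e^{i\theta})d\theta$, and $\|a\|_p=\left(\frac{1}{2\pi}\int_0^{2\pi}|a(e^{i\theta})|^pd\theta\right)^{1/p}$. *)

(* Defs.v *)
(* Complex numbers: an arbitrary numClosedFieldType C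
   (e.g. the complex numbers), with conjugation  z^*  and real part  'Re z. *)
From mathcomp Require Import all_boot all_order all_algebra.
Set Implicit Arguments. Unset Strict Implicit. Unset Printing Implicit Defensive.
Import Order.TTheory GRing.Theory Num.Theory.
Local Open Scope ring_scope.

Section Defs.
Variable C : numClosedFieldType.

(* len a = 1 + deg a  (mathcomp's size of a polynomial) *)
Definition plen (a : {poly C}) : nat := size a.

Definition pdagger (a : {poly C}) : {poly C} :=
  \poly_(i < size a) (a`_(size a - 1 - i))^*.

Definition ptilde (a : {poly C}) : {poly C} := a \Po (- 'X).

(* For polynomials p, q:  int ( p * conj(q) )  = constant coefficient of the
   Laurent polynomial p(z) * sum_j conj(q_j) z^{-j}, i.e. sum_j p_j conj(q_j). *)
Definition int_mul_conj (p q : {poly C}) : C :=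
  \sum_(j < maxn (size p) (size q)) p`_j * (q`_j)^*.

Definition norm2sq (a : {poly C}) : C := int_mul_conj a a.

Definition step (s : C) (f : {poly C}) : {poly C} :=
  f + s *: ('X^(plen f) * ((pdagger f) \Po (- 'X))).

Fixpoint iter_seq (sigma : nat -> C) (f0 : {poly C}) (n : nat) : {poly C} :=
  match n with
  | 0 => f0
  | n'.+1 => step (sigma n') (iter_seq sigma f0 n')
  end.

End Defs.

(* Main.v *)
Require Import Defs.
From mathcomp Require Import all_boot all_order all_algebra.
From mathcomp Require Import cyclic separable cyclotomic.
From mathcomp Require Import zify ring lra.
Import Order.TTheory GRing.Theory Num.Theory.
Local Open Scope ring_scope.

Section Work.
Variable C : numClosedFieldType.
Implicit Types p q f g : {poly C}.

Lemma int_mul_conj_wide p q N : (size p <= N)%N -> (size q <= N)%N ->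
  int_mul_conj p q = \sum_(j < N) p`_j * (q`_j)^*.
Proof.
move=> hp hq; rewrite /int_mul_conj.
have hm : (maxn (size p) (size q) <= N)%N by rewrite geq_max hp hq.
rewrite -(subnKC hm) big_split_ord /=.
rewrite [X in _ + X]big1 ?addr0 // => j _.
by rewrite [p`_ _]nth_default ?mul0r //=; apply: leq_trans (leq_addr _ _); rewrite leq_max leqnn.
Qed.

Lemma int_mul_conj_Xn p n : int_mul_conj p 'X^n = p`_n.
Proof.
rewrite (@int_mul_conj_wide p _ (maxn (size p) n.+1)) ?leq_maxl //; last first.
  by rewrite size_polyXn leq_maxr.
have hn : (n < maxn (size p) n.+1)%N by rewrite leq_max leqnn orbT.
rewrite (bigD1 (Ordinal hn)) //= coefXn eqxx conjC_nat mulr1 big1 ?addr0 //.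
move=> j /eqP hj; rewrite coefXn; case: eqP => [e|_]; last by rewrite conjC_nat mulr0.
by exfalso; apply: hj; apply: val_inj.
Qed.

Lemma horner_pdagger p y : y^* * y = 1 ->
  (pdagger p).[y] = y ^+ (size p).-1 * (p.[y])^*.
Proof.
move=> hy; rewrite /pdagger horner_poly horner_coef rmorph_sum mulr_sumr.
rewrite (reindex_inj rev_ord_inj) /=; apply: eq_bigr => i _.
rewrite rmorphM rmorphXn /=.
have hi := ltn_ord i. move: hi; set n := size p; move: (nat_of_ord i) => j hi.
have -> : (n - 1 - (n - j.+1) = j)%N by lia.
have -> : n.-1 = ((n - j.+1) + j)%N by lia.
have e : y ^+ j * y^* ^+ j = 1 by rewrite -exprMn mulrC hy expr1n.
rewrite exprD; transitivity ((p`_j)^* * y ^+ (n - j.+1) * (y ^+ j * y^* ^+ j)); first by rewrite e mulr1.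
ring.
Qed.

Lemma horner_ptilde p x : (ptilde p).[x] = p.[-x].
Proof. by rewrite /ptilde horner_comp hornerN hornerX. Qed.

Lemma step_eval f (s x : C) k : size f = k.+1 -> x^* * x = 1 ->
  (step s f).[x] = f.[x] + s * (x ^+ k.+1 * (-x) ^+ k) * (f.[-x])^*.
Proof.
move=> hs hx; rewrite /step /plen hs hornerD hornerZ hornerM hornerXn horner_comp hornerN hornerX.
rewrite horner_pdagger; last by rewrite rmorphN mulrNN.
by rewrite hs /= !mulrA.
Qed.


Section Roots.
Variable K : nat.
Hypothesis K_gt0 : (0 < K)%N.
Variable w : C.
Hypothesis prim_w : (K + K).-primitive_root w.

Lemma w_unit : w^* * w = 1.
Proof.
have h1 : `|w| ^+ (K + K) = 1 by rewrite -normrX (prim_expr_order prim_w) normr1.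
have : `|w| == 1 by rewrite -(pexpr_eq1 (n := (K + K)%N)) ?h1 //; lia.
by move/eqP => h; rewrite -normCKC h expr1n.
Qed.

Lemma wK : w ^+ K = -1.
Proof.
have h2 : (w ^+ K - 1) * (w ^+ K + 1) = 0.
  by rewrite -subr_sqr -exprM muln2 -addnn (prim_expr_order prim_w) ?expr1n subrr.
have hn1 : w ^+ K != 1.
  by rewrite -(prim_order_dvd prim_w); apply/negP => /dvdn_leq; lia.
move/eqP: h2; rewrite mulf_eq0 subr_eq0 (negbTE hn1) /= addr_eq0 => /eqP //.
Qed.

Lemma pow_unit i : (w ^+ i)^* * w ^+ i = 1.
Proof. by rewrite rmorphXn -exprMn w_unit expr1n. Qed.

Lemma npow_unit i : (- w ^+ i)^* * (- w ^+ i) = 1.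
Proof. by rewrite rmorphN mulrNN pow_unit. Qed.

Lemma root_sum (j k : 'I_(K + K)) :
  \sum_(i < K + K) (w ^+ j * w^* ^+ k) ^+ i = if j == k then (K + K)%:R else 0.
Proof.
case: eqP => [->|hjk].
  rewrite -exprMn mulrC w_unit expr1n; under eq_bigr do rewrite expr1n.
  by rewrite sumr_const card_ord.
set z := w ^+ j * w^* ^+ k.
have hzM : z ^+ (K + K) = 1.
  have hv : w^* ^+ (K + K) = 1 by rewrite -rmorphXn (prim_expr_order prim_w) rmorph1.
  by rewrite /z exprMn !(exprAC _ _ (K + K)) hv (prim_expr_order prim_w) !expr1n mulr1.
have hz1 : z != 1.
  apply/eqP => hz; apply: hjk.
  have : w ^+ j = w ^+ k.
    by rewrite -[RHS]mul1r -hz /z -mulrA -exprMn w_unit expr1n mulr1.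
  move/eqP; rewrite (eq_prim_root_expr prim_w) => /eqP.
  by rewrite !modn_small //; apply: val_inj.
have := subrX1 z (K + K); rewrite hzM subrr => /esym/eqP.
by rewrite mulf_eq0 subr_eq0 (negbTE hz1) /= => /eqP.
Qed.

Lemma full_sum p q : (size p <= K + K)%N -> (size q <= K + K)%N ->
  (K + K)%:R * int_mul_conj p q =
  \sum_(i < K + K) p.[w ^+ i] * (q.[w ^+ i])^*.
Proof.
move=> hp hq; rewrite (@int_mul_conj_wide p q (K + K) hp hq).
have e : forall i : 'I_(K + K), p.[w ^+ i] * (q.[w ^+ i])^* =
   \sum_(j < K + K) \sum_(k < K + K) p`_j * (q`_k)^* * (w ^+ j * w^* ^+ k) ^+ i.
  move=> i; rewrite (@horner_coef_wide C _ p _ hp) (@horner_coef_wide C _ q _ hq) rmorph_sum mulr_suml.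
  apply: eq_bigr => j _; rewrite mulr_sumr; apply: eq_bigr => k _.
  rewrite rmorphM rmorphXn rmorphXn exprMn -!exprM mulnC [(k * i)%N]mulnC !exprM; ring.
rewrite (eq_bigr _ (fun i _ => e i)) exchange_big /= mulr_sumr; apply: eq_bigr => j _.
rewrite exchange_big /= (bigD1 j) //= -mulr_sumr root_sum eqxx big1 ?addr0; first by rewrite mulrC.
by move=> k hk; rewrite -mulr_sumr root_sum eq_sym (negbTE hk) mulr0.
Qed.

Lemma ip_sum p q : (size p <= K + K)%N -> (size q <= K + K)%N ->
  (K + K)%:R * int_mul_conj p q =
  \sum_(i < K) (p.[w ^+ i] * (q.[w ^+ i])^* + p.[- w ^+ i] * (q.[- w ^+ i])^*).
Proof.
move=> hp hq; rewrite full_sum // big_split_ord /= big_split /=; congr (_ + _).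
by apply: eq_bigr => i _; rewrite exprD wK mulN1r.
Qed.

End Roots.

Lemma size_ptilde p : size (ptilde p) = size p.
Proof. by rewrite /ptilde size_comp_poly2 // size_polyN size_polyX. Qed.

Lemma szM {p q a b} : (size p <= a)%N -> (size q <= b)%N -> (size (p * q)%R <= (a + b).-1)%N.
Proof.
move=> ha hb; apply: (leq_trans (size_polyMleq p q)).
by rewrite -!subn1 leq_sub2r // leq_add.
Qed.

Lemma size_pdagger f : f`_0 != 0 -> size (pdagger f) = size f.
Proof.
move=> h0; rewrite /pdagger size_poly_eq //.
by rewrite subn1 subnn conjC_eq0.
Qed.

Lemma size_gt0_of {f} : f`_0 != 0 -> (0 < size f)%N.
Proof. by move=> h0; rewrite size_poly_gt0; apply: contraNneq h0 => ->; rewrite coef0. Qed.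

Lemma step_size f (s : C) : s != 0 -> f`_0 != 0 -> size (step s f) = (size f + size f)%N.
Proof.
move=> hs h0; have hm := size_gt0_of h0.
have hc : size (pdagger f \Po - 'X) = size f.
  by rewrite size_comp_poly2 ?size_pdagger // size_polyN size_polyX.
have hnz : pdagger f \Po - 'X != 0 by rewrite -size_poly_gt0 hc.
rewrite /step /plen addrC size_polyDl size_scale // mulrC size_mulXn // hc //.
lia.
Qed.

Lemma step_coef0 f (s : C) : (0 < size f)%N -> (step s f)`_0 = f`_0.
Proof. by move=> hm; rewrite /step /plen coefD coefZ coefXnM hm mulr0 addr0. Qed.

Lemma conj_inv (u : C) : u^* * u = 1 -> u^* = u^-1.
Proof.
move=> hu; have hu0 : u != 0 by apply: contra_eq_neq hu => ->; rewrite mulr0 eq_sym oner_eq0.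
by rewrite -[LHS]mulr1 -(mulfV hu0) mulrA hu mul1r.
Qed.

Lemma unit_nz (u : C) : u^* * u = 1 -> u != 0.
Proof. by move=> hu; apply: contra_eq_neq hu => ->; rewrite mulr0 eq_sym oner_eq0. Qed.

Lemma u_neg (s x : C) k : s * ((-x) ^+ k.+1 * (- - x) ^+ k) = - (s * (x ^+ k.+1 * (-x) ^+ k)).
Proof. rewrite opprK !exprS; ring. Qed.

Lemma s_sq (s : C) : (s = 1 \/ s = -1) -> s ^+ 2 = 1.
Proof. by case=> ->; rewrite ?sqrrN expr1n. Qed.

Lemma s_unit (s : C) : (s = 1 \/ s = -1) -> s^* * s = 1.
Proof. by case=> ->; rewrite ?rmorphN rmorph1 ?mulrNN mulr1. Qed.

Lemma u_sq (s x : C) k : (s = 1 \/ s = -1) -> (s * (x ^+ k.+1 * (-x) ^+ k)) ^+ 2 = x ^+ (4 * k + 2).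
Proof.
move=> /s_sq hs; rewrite !exprMn hs mul1r -!exprM [(k * 2)%N]mulnC (exprM (-x) 2 k) sqrrN -exprM -exprD.
by congr (_ ^+ _); lia.
Qed.

Lemma u_unit (s x : C) k : (s = 1 \/ s = -1) -> x^* * x = 1 ->
  (s * (x ^+ k.+1 * (-x) ^+ k))^* * (s * (x ^+ k.+1 * (-x) ^+ k)) = 1.
Proof.
move=> /s_unit hs hx; have hy : (-x)^* * (-x) = 1 by rewrite rmorphN mulrNN.
rewrite !rmorphM !rmorphXn mulrACA hs mul1r mulrACA -!exprMn hx hy !expr1n mulr1 //.
Qed.


Lemma step_eval_neg f (s x : C) k : size f = k.+1 -> x^* * x = 1 ->
  (step s f).[-x] = f.[-x] + (- (s * (x ^+ k.+1 * (-x) ^+ k))) * (f.[x])^*.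
Proof.
move=> hs hx; rewrite (@step_eval f s (-x) k hs); last by rewrite rmorphN mulrNN.
by rewrite u_neg opprK.
Qed.

Lemma u_sq_neg (s x : C) k : (s = 1 \/ s = -1) -> (s * (x ^+ k.+1 * (-x) ^+ k)) ^+ 2 = (-x) ^+ (4 * k + 2).
Proof. by move=> hs; rewrite -(u_sq s (-x) k hs) u_neg sqrrN. Qed.

Section Comb.
Variable K : nat.
Implicit Types t : 'I_K -> C.

Lemma combA t5 t1 t2 t3 t4 : \sum_i t5 i = 0 ->
  (forall i, t1 i = 2%:R * t2 i + 2%:R * t3 i + (t4 i + (t4 i)^*) + (t5 i + (t5 i)^*)) ->
  \sum_i t1 i = 2%:R * \sum_i t2 i + 2%:R * \sum_i t3 i + (\sum_i t4 i + (\sum_i t4 i)^*).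
Proof.
move=> e5 h; rewrite (eq_bigr _ (fun i _ => h i)) !big_split /= -!mulr_sumr -!rmorph_sum e5 rmorph0.
by rewrite !addr0.
Qed.

Lemma combS t5 tB tD t2 : \sum_i t5 i = 0 ->
  (forall i, tB i + (tD i + (tD i)^*) / 2%:R = 4%:R * t2 i - 2%:R * t5 i - 2%:R * (t5 i)^*) ->
  \sum_i tB i + (\sum_i tD i + (\sum_i tD i)^*) / 2%:R = 4%:R * \sum_i t2 i.
Proof.
move=> e5 h.
have -> : \sum_i tB i + (\sum_i tD i + (\sum_i tD i)^*) / 2%:R =
   \sum_i (tB i + (tD i + (tD i)^*) / 2%:R).
  by rewrite big_split /= -mulr_suml rmorph_sum -big_split.
rewrite (eq_bigr _ (fun i _ => h i)) !sumrB -!mulr_sumr -rmorph_sum e5 rmorph0.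
by rewrite !mulr0 !subr0.
Qed.

Lemma combN t1 t2 : (forall i, t1 i = 2%:R * t2 i) -> \sum_i t1 i = 2%:R * \sum_i t2 i.
Proof. by move=> h; rewrite (eq_bigr _ (fun i _ => h i)) -mulr_sumr. Qed.

End Comb.


Lemma prim_root_exists {n} : (n > 0)%N -> {z : C | n.-primitive_root z}.
Proof.
pose p : {poly C} := 'X^n - 1; have [r Dp] := closed_field_poly_normal p.
move=> n_gt0; apply/sigW; rewrite (monicP _) ?monicXnsubC // scale1r in Dp.
have rn1: all n.-unity_root r by apply/allP=> z; rewrite -root_prod_XsubC -Dp.
have sz_r: (n < (size r).+1)%N.
  by rewrite -(size_prod_XsubC r id) -Dp size_XnsubC.
have [|z] := hasP (has_prim_root n_gt0 rn1 _ sz_r); last by exists z.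
by rewrite -separable_prod_XsubC -Dp separable_Xn_sub_1 // pnatr_eq0 -lt0n.
Qed.



Ltac ptclose hu := rewrite ?(rmorphD, rmorphN, rmorphM, rmorphXn) /=; rewrite ?conjCK (@conj_inv _ hu);
  field; exact: (@unit_nz _ hu).

Lemma step_N f (s : C) k : size f = k.+1 -> f`_0 != 0 -> (s = 1 \/ s = -1) ->
  norm2sq (step s f) = 2%:R * norm2sq f.
Proof.
move=> hf f0 hs.
have hs0 : s != 0 by case: hs => ->; rewrite ?oppr_eq0 oner_eq0.
pose K := (k.+1 + k.+1)%N.
have K0 : (0 < K)%N by rewrite /K; lia.
have hKK : (0 < K + K)%N by lia.
have [w pw] := prim_root_exists hKK.
have hM : (K + K)%:R != 0 :> C by rewrite pnatr_eq0; lia.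
have hF : size (step s f) = (k.+1 + k.+1)%N by rewrite step_size // hf.
apply: (mulfI hM); rewrite mulrCA /norm2sq !(@ip_sum K K0 w pw); try (rewrite ?hF ?hf /K; lia).
apply: combN => i.
have hx := @pow_unit K K0 w pw i.
rewrite (step_eval f s _ k hf hx) (step_eval_neg f s _ k hf hx).
have hu := @u_unit s _ k hs hx.
set u := s * (_ * _) in hu *; clearbody u.
move: (f.[w ^+ i]) (f.[- w ^+ i]) => a c.
ptclose hu.
Qed.


Section StepAS.
Variables (f g : {poly C}) (s : C) (k : nat).
Hypotheses (hf : size f = k.+1) (hg : size g = k.+1) (f0 : f`_0 != 0) (g0 : g`_0 != 0)
  (hs : s = 1 \/ s = -1).

Let K := (k.+1 + k.+1)%N.
Let K0 : (0 < K)%N. Proof. rewrite /K; lia. Qed.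
Let hs0 : s != 0. Proof. by case: hs => ->; rewrite ?oppr_eq0 oner_eq0. Qed.
Let hsf : (size f <= k.+1)%N. Proof. by rewrite hf. Qed.
Let hsg : (size g <= k.+1)%N. Proof. by rewrite hg. Qed.
Let hsft : (size (ptilde f) <= k.+1)%N. Proof. by rewrite size_ptilde hf. Qed.
Let hsgt : (size (ptilde g) <= k.+1)%N. Proof. by rewrite size_ptilde hg. Qed.
Let hsF : (size (step s f) <= k.+1 + k.+1)%N. Proof. by rewrite step_size // hf. Qed.
Let hsG : (size (step s g) <= k.+1 + k.+1)%N. Proof. by rewrite step_size // hg. Qed.
Let hsFt : (size (ptilde (step s f)) <= k.+1 + k.+1)%N. Proof. by rewrite size_ptilde step_size // hf. Qed.
Let hsGt : (size (ptilde (step s g)) <= k.+1 + k.+1)%N. Proof. by rewrite size_ptilde step_size // hg. Qed.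

Lemma step_A :
  norm2sq (step s f * step s g) = 2%:R * (norm2sq (f * g) +
    (norm2sq (f * ptilde g) + 'Re (int_mul_conj (f * ptilde f) (g * ptilde g)))).
Proof.
have hKK : (0 < K + K)%N by lia.
have [w pw] := prim_root_exists hKK.
have hM : (K + K)%:R != 0 :> C by rewrite pnatr_eq0; lia.
have h2 : 2%:R != 0 :> C by rewrite pnatr_eq0.
apply: (mulfI hM).
have eR : forall (A B z : C), (K + K)%:R * (2%:R * (A + (B + 'Re z))) =
   2%:R * ((K + K)%:R * A) + 2%:R * ((K + K)%:R * B) + ((K + K)%:R * z + ((K + K)%:R * z)^*).
  by move=> A B z; rewrite ReE rmorphM /= conjC_nat; field.
have s1 : (size (step s f * step s g)%R <= K + K)%N by apply: (leq_trans (szM hsF hsG)); rewrite /K; lia.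
have s2 : (size (f * g)%R <= K + K)%N by apply: (leq_trans (szM hsf hsg)); rewrite /K; lia.
have s3 : (size (f * ptilde g)%R <= K + K)%N by apply: (leq_trans (szM hsf hsgt)); rewrite /K; lia.
have s4 : (size (f * ptilde f)%R <= K + K)%N by apply: (leq_trans (szM hsf hsft)); rewrite /K; lia.
have s5 : (size (g * ptilde g)%R <= K + K)%N by apply: (leq_trans (szM hsg hsgt)); rewrite /K; lia.
have s6 : (size (f * g * ptilde f * ptilde g)%R <= 4 * k + 1)%N.
  by apply: (leq_trans (szM (szM (szM hsf hsg) hsft) hsgt)); lia.
have s6' : (size (f * g * ptilde f * ptilde g)%R <= K + K)%N by apply: (leq_trans s6); rewrite /K; lia.
have s7 : (size ('X^(4 * k + 2) : {poly C}) <= K + K)%N by rewrite size_polyXn /K; lia.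
have e5 := @ip_sum K K0 w pw _ _ s6' s7.
rewrite int_mul_conj_Xn nth_default ?mulr0 in e5; last by apply: (leq_trans s6); lia.
rewrite eR /norm2sq !(@ip_sum K K0 w pw) //.
apply: (@combA K _ _ _ _ _ (esym e5)) => i /=.
have hx := @pow_unit K K0 w pw i.
rewrite !hornerM !horner_ptilde !opprK !hornerXn.
rewrite (step_eval f s _ k hf hx) (step_eval_neg f s _ k hf hx).
rewrite (step_eval g s _ k hg hx) (step_eval_neg g s _ k hg hx).
rewrite -(u_sq s (w ^+ i) k hs) -(u_sq_neg s (w ^+ i) k hs).
have hu := @u_unit s _ k hs hx.
set u := s * (_ * _) in hu *; clearbody u.
move: (f.[w ^+ i]) (f.[- w ^+ i]) (g.[w ^+ i]) (g.[- w ^+ i]) => a c b d.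
ptclose hu.
Qed.

Lemma step_S :
  norm2sq (step s f * ptilde (step s g)) +
    'Re (int_mul_conj (step s f * ptilde (step s f)) (step s g * ptilde (step s g)))
  = 4%:R * norm2sq (f * g).
Proof.
have hKK : (0 < K + K)%N by lia.
have [w pw] := prim_root_exists hKK.
have hM : (K + K)%:R != 0 :> C by rewrite pnatr_eq0; lia.
have h2 : 2%:R != 0 :> C by rewrite pnatr_eq0.
apply: (mulfI hM).
have eR : forall (B z : C), (K + K)%:R * (B + 'Re z) =
   (K + K)%:R * B + ((K + K)%:R * z + ((K + K)%:R * z)^*) / 2%:R.
  by move=> B z; rewrite ReE rmorphM /= conjC_nat; field.
have s1 : (size (step s f * ptilde (step s g))%R <= K + K)%N by apply: (leq_trans (szM hsF hsGt)); rewrite /K; lia.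
have s2 : (size (f * g)%R <= K + K)%N by apply: (leq_trans (szM hsf hsg)); rewrite /K; lia.
have s3 : (size (step s f * ptilde (step s f))%R <= K + K)%N by apply: (leq_trans (szM hsF hsFt)); rewrite /K; lia.
have s4 : (size (step s g * ptilde (step s g))%R <= K + K)%N by apply: (leq_trans (szM hsG hsGt)); rewrite /K; lia.
have s6 : (size (f * g * ptilde f * ptilde g)%R <= 4 * k + 1)%N.
  by apply: (leq_trans (szM (szM (szM hsf hsg) hsft) hsgt)); lia.
have s6' : (size (f * g * ptilde f * ptilde g)%R <= K + K)%N by apply: (leq_trans s6); rewrite /K; lia.
have s7 : (size ('X^(4 * k + 2) : {poly C}) <= K + K)%N by rewrite size_polyXn /K; lia.
have e5 := @ip_sum K K0 w pw _ _ s6' s7.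
rewrite int_mul_conj_Xn nth_default ?mulr0 in e5; last by apply: (leq_trans s6); lia.
rewrite eR mulrCA /norm2sq !(@ip_sum K K0 w pw) //.
apply: (@combS K _ _ _ _ (esym e5)) => i /=.
have hx := @pow_unit K K0 w pw i.
rewrite !hornerM !horner_ptilde !opprK !hornerXn.
rewrite (step_eval f s _ k hf hx) (step_eval_neg f s _ k hf hx).
rewrite (step_eval g s _ k hg hx) (step_eval_neg g s _ k hg hx).
rewrite -(u_sq s (w ^+ i) k hs) -(u_sq_neg s (w ^+ i) k hs).
have hu := @u_unit s _ k hs hx.
set u := s * (_ * _) in hu *; clearbody u.
move: (f.[w ^+ i]) (f.[- w ^+ i]) (g.[w ^+ i]) (g.[- w ^+ i]) => a c b d.
ptclose hu.
Qed.

End StepAS.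


Lemma norm2sq_neq0 f : f`_0 != 0 -> norm2sq f != 0.
Proof.
move=> h0; have hm := size_gt0_of h0.
rewrite /norm2sq /int_mul_conj maxnn.
case e: (size f) hm => [//|k] _.
rewrite big_ord_recl /=; apply: lt0r_neq0.
have hp : 0 < f`_0 * (f`_0)^* by rewrite -normCK exprn_gt0 // normr_gt0.
apply: (lt_le_trans hp).
by rewrite lerDl sumr_ge0 // => j _; rewrite -normCK exprn_ge0.
Qed.


Section Main.
Variables (f0 g0 : {poly C}) (sigma : nat -> C).
Hypotheses (hlen : size f0 = size g0) (f00 : f0`_0 != 0) (g00 : g0`_0 != 0)
  (hsig : forall n, sigma n = 1 \/ sigma n = -1).

Let A := norm2sq (f0 * g0).
Let S := norm2sq (f0 * ptilde g0) + 'Re (int_mul_conj (f0 * ptilde f0) (g0 * ptilde g0)).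
Let r : C := - (2%:R)^-1.
Let al n := (2%:R * A + S) / 3%:R + r ^+ n * ((A - S) / 3%:R).
Let be n := (2%:R * A + S) / 3%:R - 2%:R * r ^+ n * ((A - S) / 3%:R).

Lemma main_ind n :
  let fn := iter_seq sigma f0 n in let gn := iter_seq sigma g0 n in
  [/\ size fn = size gn, fn`_0 = f0`_0, gn`_0 = g0`_0,
      norm2sq fn = 2%:R ^+ n * norm2sq f0 /\ norm2sq gn = 2%:R ^+ n * norm2sq g0 &
      norm2sq (fn * gn) = 4%:R ^+ n * al n /\
      norm2sq (fn * ptilde gn) + 'Re (int_mul_conj (fn * ptilde fn) (gn * ptilde gn)) = 4%:R ^+ n * be n].
Proof.
have h3 : 3%:R != 0 :> C by rewrite pnatr_eq0.
have h2 : 2%:R != 0 :> C by rewrite pnatr_eq0.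
elim: n => [|n IH].
  by rewrite /= !expr0 !mul1r; split => //; split => //; rewrite /al /be expr0 -/A -/S; field.
move: IH => /= [hsz hf0 hg0 [hnf hng] [hA hS]].
set fn := iter_seq sigma f0 n in hsz hf0 hnf hA hS *.
set gn := iter_seq sigma g0 n in hsz hg0 hng hA hS *.
have fn0 : fn`_0 != 0 by rewrite hf0.
have gn0 : gn`_0 != 0 by rewrite hg0.
have := size_gt0_of fn0; case ek: (size fn) => [//|k] _.
have ekg : size gn = k.+1 by rewrite -hsz.
have hs := hsig n.
have hs0 : sigma n != 0 by case: hs => ->; rewrite ?oppr_eq0 oner_eq0.
split.
- by rewrite !step_size // ek ekg.
- by rewrite step_coef0 ?ek.
- by rewrite step_coef0 ?ekg.
- by rewrite (@step_N fn (sigma n) k ek fn0 hs) (@step_N gn (sigma n) k ekg gn0 hs) hnf hng !exprS !mulrA.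
split.
- by rewrite (@step_A fn gn (sigma n) k ek ekg fn0 gn0 hs) hA hS /al /be !exprS /r; field.
- by rewrite (@step_S fn gn (sigma n) k ek ekg fn0 gn0 hs) hA /al /be !exprS /r; field.
Qed.

End Main.

End Work.

Theorem theorem2p4 (C : numClosedFieldType) (f0 g0 : {poly C})
    (sigma : nat -> C) :
  plen f0 = plen g0 ->
  f0`_0 != 0 -> g0`_0 != 0 ->
  (forall n, sigma n = 1 \/ sigma n = -1) ->
  forall n : nat,
    let fn := iter_seq sigma f0 n in
    let gn := iter_seq sigma g0 n in
    let A := norm2sq (f0 * g0) in
    let B := norm2sq (f0 * ptilde g0) in
    let D := 'Re (int_mul_conj (f0 * ptilde f0) (g0 * ptilde g0)) in
    let N := norm2sq f0 * norm2sq g0 in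
    norm2sq (fn * gn) / (norm2sq fn * norm2sq gn)
    = (2%:R * A + B + D) / (3%:R * N)
      + (- (2%:R)^-1) ^+ n * ((A - B - D) / (3%:R * N)).
Proof.
move=> hlen f00 g00 hsig n fn gn A B D N.
have [_ _ _ [hnf hng] [hA _]] := @main_ind C f0 g0 sigma hlen f00 g00 hsig n.
rewrite /fn /gn hA hnf hng /N /A /B /D.
have h3 : 3%:R != 0 :> C by rewrite pnatr_eq0.
have h2 : 2%:R != 0 :> C by rewrite pnatr_eq0.
have nf := @norm2sq_neq0 C f0 f00.
have ng := @norm2sq_neq0 C g0 g00.
have e4 : (4%:R : C) ^+ n = 2%:R ^+ n * 2%:R ^+ n by rewrite -exprMn -natrM.
have h2n : (2%:R : C) ^+ n != 0 by rewrite expf_neq0.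
rewrite e4 !addrA.
move: (2%:R ^+ n : C) h2n => t ht.
field. all: try done. by rewrite ng nf ht.
Qed.
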